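(* Let $A$ be a finite-dimensional real associative algebra with unit $u$, and let $\{\cdot,\cdot\}$ be a quadratic Poisson bracket on $A$ compatible with its multiplication, with dual map $\delta\colon\mathrm{Symm}(A\otimes A)\to A\wedge A$. Then the group $A^\times$ of invertible elements of $A$ (an open subset of $A$), equipped with the restriction of this bracket, is a Poisson Lie group, and its tangent Lie bialgebra is $A_L$ with cocommutator $\Delta(x)=\delta(x\otimes u+u\otimes x)$.
   Context: $A_L$ is the Lie algebra on $A$ with bracket $[a,b]=ab-ba$ (the Lie algebra of $A^\times$). A quadratic Poisson bracket on $A$ is a Poisson bracket on $C^\infty(A)$ such that the bracket of two linear functions (elements of $A^*$) is a homogeneous quadratic function; it is encoded by $\delta^*(\xi\wedge\eta)=\{\xi,\eta\}\in\mathrm{Sym}^2(A^* )$, and $\delta$ is the dual map, with $\mathrm{Symm}(A\otimes A)$ (symmetric tensors) identified with $(\mathrm{Sym}^2A^* )^*$ and $A\wedge A$ (skew-symmetric tensors) with $(A^*\wedge A^* )^*$. Compatibility with the multiplication means that the multiplication map $A\times A\to A$ is a Poisson map when $A\times A$ carries the product Poisson structure. A Poisson Lie group is a Lie group with a Poisson bracket such that the group multiplication $G\times G\to G$ is a Poisson map; its tangent Lie bialgebra is the Lie algebra with cocommutator given by the linearization of the Poisson tensor at the identity. *)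

(* Defs.v *)
From HB Require Import structures.
From mathcomp Require Import all_boot all_order all_algebra.
From mathcomp Require Import all_classical all_reals all_analysis.
Set Implicit Arguments. Unset Strict Implicit. Unset Printing Implicit Defensive.
Import Order.TTheory GRing.Theory Num.Theory.
Import numFieldNormedType.Exports.
Local Open Scope classical_set_scope.
Local Open Scope ring_scope.

(* Coordinates: a finite-dimensional real vector space is 'rV[R]_n.
   Tensors in A (x) A are n x n matrices, x (x) y := x^T *m y.
   A /\ A = is_skew_mx-symmetric matrices, Symm(A (x) A) = symmetric matrices.
   Pairing with the dual: <M, xi (x) eta> = xi *m M *m eta^T. *)

Definition tens {R : realType} {n : nat} (x y : 'rV[R]_n) : 'M[R]_n := x^T *m y.

Definition is_skew_mx {R : realType} {n : nat} (M : 'M[R]_n) : Prop := M^T = - M.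
Definition is_symm_mx {R : realType} {n : nat} (M : 'M[R]_n) : Prop := M^T = M.

Definition ev {R : realType} {n : nat} (i : 'I_n) : 'rV[R]_n := delta_mx 0 i.

Definition pd {R : realType} {n : nat} (f : 'rV[R]_n -> R) (i : 'I_n) (x : 'rV[R]_n) : R :=
  derive f x (ev i).

Definition assoc_unital_algebra {R : realType} {n : nat}
    (mul : 'rV[R]_n -> 'rV[R]_n -> 'rV[R]_n) (u : 'rV[R]_n) : Prop :=
  [/\ (forall (a : R) x y z, mul (a *: x + y) z = a *: mul x z + mul y z),
      (forall (a : R) x y z, mul z (a *: x + y) = a *: mul z x + mul z y),
      (forall x y z, mul x (mul y z) = mul (mul x y) z) &
      (forall x, mul u x = x /\ mul x u = x)].

(* A bivector field P (P x i j = {x_i, x_j}(x)) on an open set U and the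
   Poisson bracket it defines: {f,g}(x) = sum_ij P x i j d_i f(x) d_j g(x). *)
Definition pbracket {R : realType} {n : nat} (P : 'rV[R]_n -> 'M[R]_n)
    (f g : 'rV[R]_n -> R) : 'rV[R]_n -> R :=
  fun x => \sum_(i < n) \sum_(j < n) P x i j * pd f i x * pd g j x.

(* P is a Poisson structure on the open set U: smooth-enough is_skew_mx bivector
   field satisfying the Jacobi identity (in coordinates: Jacobi for the
   coordinate functions, equivalently [P,P] = 0). *)
Definition poisson_structure {R : realType} {n : nat} (U : set 'rV[R]_n)
    (P : 'rV[R]_n -> 'M[R]_n) : Prop :=
  [/\ open U,
      (forall x, U x -> differentiable P x),
      (forall x, U x -> is_skew_mx (P x)) &
      (forall x, U x -> forall i j k : 'I_n,
         \sum_(l < n) (P x i l * pd (fun y => P y j k) l x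
                     + P x j l * pd (fun y => P y k i) l x
                     + P x k l * pd (fun y => P y i j) l x) = 0)].

Definition jac {R : realType} {n m : nat} (phi : 'rV[R]_n -> 'rV[R]_m)
    (x : 'rV[R]_n) : 'M[R]_(m, n) :=
  \matrix_(k, i) pd (fun y => phi y 0 k) i x.

Definition poisson_map {R : realType} {n m : nat}
    (U1 : set 'rV[R]_n) (P1 : 'rV[R]_n -> 'M[R]_n)
    (U2 : set 'rV[R]_m) (P2 : 'rV[R]_m -> 'M[R]_m)
    (phi : 'rV[R]_n -> 'rV[R]_m) : Prop :=
  (forall x, U1 x -> U2 (phi x)) /\
  (forall x, U1 x -> differentiable phi x /\
     jac phi x *m P1 x *m (jac phi x)^T = P2 (phi x)).

Definition prod_set {R : realType} {n : nat} (U : set 'rV[R]_n) : set 'rV[R]_(n + n) :=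
  [set z | U (lsubmx z) /\ U (rsubmx z)].

Definition prod_P {R : realType} {n : nat} (P : 'rV[R]_n -> 'M[R]_n)
    (z : 'rV[R]_(n + n)) : 'M[R]_(n + n) :=
  block_mx (P (lsubmx z)) 0 0 (P (rsubmx z)).

Definition mulmap {R : realType} {n : nat} (mul : 'rV[R]_n -> 'rV[R]_n -> 'rV[R]_n)
    (z : 'rV[R]_(n + n)) : 'rV[R]_n := mul (lsubmx z) (rsubmx z).

Definition poisson_lie_group {R : realType} {n : nat}
    (mul : 'rV[R]_n -> 'rV[R]_n -> 'rV[R]_n) (u : 'rV[R]_n)
    (U : set 'rV[R]_n) (P : 'rV[R]_n -> 'M[R]_n) : Prop :=
  [/\ U u,
      (forall x, U x -> exists y, U y /\ mul x y = u /\ mul y x = u),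
      poisson_structure U P,
      poisson_structure (prod_set U) (prod_P P) &
      poisson_map (prod_set U) (prod_P P) U P (mulmap mul)].

Definition linearization {R : realType} {n : nat} (P : 'rV[R]_n -> 'M[R]_n)
    (u x : 'rV[R]_n) : 'M[R]_n :=
  \matrix_(i, j) derive (fun y => P y i j) u x.

Definition ad_tens {R : realType} {n : nat} (br : 'rV[R]_n -> 'rV[R]_n -> 'rV[R]_n)
    (x : 'rV[R]_n) (T : 'M[R]_n) : 'M[R]_n :=
  \sum_(i < n) \sum_(j < n) T i j *: (tens (br x (ev i)) (ev j) + tens (ev i) (br x (ev j))).

(* dual bracket on A^* (dual basis coordinates) induced by D *)
Definition cobr {R : realType} {n : nat} (D : 'rV[R]_n -> 'M[R]_n)
    (xi eta : 'rV[R]_n) : 'rV[R]_n :=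
  \row_k (xi *m D (ev k) *m eta^T) 0 0.

Definition lie_bialgebra {R : realType} {n : nat}
    (br : 'rV[R]_n -> 'rV[R]_n -> 'rV[R]_n) (D : 'rV[R]_n -> 'M[R]_n) : Prop :=
  [/\
      (forall (a : R) x y z, br (a *: x + y) z = a *: br x z + br y z),
      (forall x y, br x y = - br y x) &
      (forall x y z, br x (br y z) + br y (br z x) + br z (br x y) = 0)] /\
  [/\
      (forall (a : R) x y, D (a *: x + y) = a *: D x + D y),
      (forall x, is_skew_mx (D x)),
      (forall xi eta zeta, cobr D xi (cobr D eta zeta) + cobr D eta (cobr D zeta xi)
                           + cobr D zeta (cobr D xi eta) = 0) &
      (forall x y, D (br x y) = ad_tens br x (D y) - ad_tens br y (D x))].

Definition commutator {R : realType} {n : nat} (mul : 'rV[R]_n -> 'rV[R]_n -> 'rV[R]_n)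
    (x y : 'rV[R]_n) : 'rV[R]_n := mul x y - mul y x.

Definition units {R : realType} {n : nat} (mul : 'rV[R]_n -> 'rV[R]_n -> 'rV[R]_n)
    (u : 'rV[R]_n) : set 'rV[R]_n :=
  [set x | exists y, mul x y = u /\ mul y x = u].

(* Main.v *)
Require Import Defs.
From HB Require Import structures.
From mathcomp Require Import all_boot all_order all_algebra.
From mathcomp Require Import all_classical all_reals all_analysis.
From mathcomp Require Import ring lra.
Import Order.TTheory GRing.Theory Num.Theory.
Import numFieldNormedType.Exports.
Local Open Scope classical_set_scope.
Local Open Scope ring_scope.

Lemma dquad (R : realType) (V W : normedModType R) (f : V -> W) (x v : V) (c d : W) :
  (forall h : R, f (h *: v + x) = f x + h *: c + (h * h) *: d) -> 'D_v f x = c.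
Proof.
move=> H; rewrite /derive.
have E : {near 0^', (fun h : R => c + h *: d) =1 (fun h => h^-1 *: ((f \o shift x) (h *: v) - f x))}.
  near=> h => /=; rewrite H.
  have h0 : h != 0 by near: h; exact: nbhs_dnbhs_neq.
  rewrite [X in h^-1 *: X]addrC !addrA addNr add0r scalerDr !scalerA mulVf // mulrA mulVf // mul1r scale1r //.
apply: cvg_lim => //.
apply: cvg_trans; first exact: (near_eq_cvg E).
have : (fun h : R => c + h *: d) @ 0 --> c + 0 *: d.
  apply: cvgD; first exact: cvg_cst.
  apply: cvgZl; exact: cvg_id.
rewrite scale0r addr0 => H0.
exact: cvg_within_filter H0.
Unshelve. all: by end_near. Qed.
Section Alg.
Context {R : realType} {n : nat} (mul : 'rV[R]_n -> 'rV[R]_n -> 'rV[R]_n)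
  (u : 'rV[R]_n) (hA : assoc_unital_algebra mul u).

Lemma amDl x y z : mul (x + y) z = mul x z + mul y z.
Proof. by case: hA => H _ _ _; rewrite -{1}(scale1r x) H scale1r. Qed.
Lemma am0l z : mul 0 z = 0.
Proof. by case: hA => H _ _ _; move: (H 1 0 0 z); rewrite !scale1r !addr0 => E; apply/esym/(addrI (mul 0 z)); rewrite addr0. Qed.
Lemma am0r z : mul z 0 = 0.
Proof. by case: hA => _ H _ _; move: (H 1 0 0 z); rewrite !scale1r !addr0 => E; apply/esym/(addrI (mul z 0)); rewrite addr0. Qed.
Lemma amZl (a : R) x z : mul (a *: x) z = a *: mul x z.
Proof. by case: hA => H _ _ _; move: (H a x 0 z); rewrite !addr0 am0l addr0. Qed.
Lemma amDr x y z : mul z (x + y) = mul z x + mul z y.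
Proof. by case: hA => _ H _ _; rewrite -{1}(scale1r x) H scale1r. Qed.
Lemma amZr (a : R) x z : mul z (a *: x) = a *: mul z x.
Proof. by case: hA => _ H _ _; move: (H a x 0 z); rewrite !addr0 am0r addr0. Qed.
Lemma amNl x z : mul (- x) z = - mul x z.
Proof. by rewrite -scaleN1r amZl scaleN1r. Qed.
Lemma amNr x z : mul z (- x) = - mul z x.
Proof. by rewrite -scaleN1r amZr scaleN1r. Qed.
Lemma amBl x y z : mul (x - y) z = mul x z - mul y z.
Proof. by rewrite amDl amNl. Qed.
Lemma amBr x y z : mul z (x - y) = mul z x - mul z y.
Proof. by rewrite amDr amNr. Qed.
Lemma amA x y z : mul x (mul y z) = mul (mul x y) z.
Proof. by case: hA. Qed.
Lemma am1l x : mul u x = x.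
Proof. by case: hA => _ _ _ H; case: (H x). Qed.
Lemma am1r x : mul x u = x.
Proof. by case: hA => _ _ _ H; case: (H x). Qed.
Lemma am_suml (I : Type) (r : seq I) (P : pred I) (F : I -> 'rV[R]_n) z :
  mul (\sum_(i <- r | P i) F i) z = \sum_(i <- r | P i) mul (F i) z.
Proof. by elim/big_rec2: _ => [|i a b _ <-]; rewrite ?am0l // amDl. Qed.
Lemma am_sumr (I : Type) (r : seq I) (P : pred I) (F : I -> 'rV[R]_n) z :
  mul z (\sum_(i <- r | P i) F i) = \sum_(i <- r | P i) mul z (F i).
Proof. by elim/big_rec2: _ => [|i a b _ <-]; rewrite ?am0r // amDr. Qed.

Definition Lmx z : 'M[R]_n := \matrix_(i, j) (mul z (ev i)) 0 j.
Definition Rmx z : 'M[R]_n := \matrix_(i, j) (mul (ev i) z) 0 j.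

Lemma rowdec (v : 'rV[R]_n) : v = \sum_i v 0 i *: ev i.
Proof. exact: row_sum_delta. Qed.

Lemma LmxE v z : v *m Lmx z = mul z v.
Proof.
apply/rowP => j; rewrite !mxE {2}(rowdec v) am_sumr summxE; apply: eq_bigr => i _.
by rewrite amZr !mxE.
Qed.
Lemma RmxE v z : v *m Rmx z = mul v z.
Proof.
apply/rowP => j; rewrite !mxE {2}(rowdec v) am_suml summxE; apply: eq_bigr => i _.
by rewrite amZl !mxE.
Qed.
Lemma LmxD x y : Lmx (x + y) = Lmx x + Lmx y.
Proof. by apply/matrixP => i j; rewrite !mxE amDl mxE. Qed.
Lemma LmxZ a x : Lmx (a *: x) = a *: Lmx x.
Proof. by apply/matrixP => i j; rewrite !mxE amZl mxE. Qed.
Lemma RmxD x y : Rmx (x + y) = Rmx x + Rmx y.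
Proof. by apply/matrixP => i j; rewrite !mxE amDr mxE. Qed.
Lemma RmxZ a x : Rmx (a *: x) = a *: Rmx x.
Proof. by apply/matrixP => i j; rewrite !mxE amZr mxE. Qed.
Lemma Lmx1 : Lmx u = 1%:M.
Proof. by apply/matrixP => i j; rewrite !mxE am1l !mxE eq_sym. Qed.
Lemma Rmx1 : Rmx u = 1%:M.
Proof. by apply/matrixP => i j; rewrite !mxE am1r !mxE eq_sym. Qed.

Lemma eD (A B : 'M[R]_n) i j : (A + B) i j = A i j + B i j. Proof. by rewrite mxE. Qed.
Lemma eZ (a : R) (A : 'M[R]_n) i j : (a *: A) i j = a * A i j. Proof. by rewrite mxE. Qed.
Lemma eN (A : 'M[R]_n) i j : (- A) i j = - A i j. Proof. by rewrite mxE. Qed.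
Lemma reD (A B : 'rV[R]_n) j : (A + B) 0 j = A 0 j + B 0 j. Proof. by rewrite mxE. Qed.
Lemma reZ (a : R) (A : 'rV[R]_n) j : (a *: A) 0 j = a * A 0 j. Proof. by rewrite mxE. Qed.

Lemma mulmap_expand h (v z : 'rV[R]_(n + n)) k :
  mulmap mul (h *: v + z) 0 k = mulmap mul z 0 k
    + h * (mul (lsubmx z) (rsubmx v) + mul (lsubmx v) (rsubmx z)) 0 k
    + (h * h) * mul (lsubmx v) (rsubmx v) 0 k.
Proof.
rewrite /mulmap !linearD !linearZ /= amDl !amDr !amZl !amZr !mxE; ring.
Qed.

Lemma pd_mulmap k i (z : 'rV[R]_(n + n)) :
  pd (fun y => mulmap mul y 0 k) i z =
  (mul (lsubmx z) (rsubmx (ev i)) + mul (lsubmx (ev i)) (rsubmx z)) 0 k.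
Proof.
rewrite /pd; apply: (@dquad _ _ _ _ _ _ _ ((mul (lsubmx (ev i)) (rsubmx (ev i))) 0 k)) => h.
by rewrite mulmap_expand.
Qed.

Lemma lsub_evl (i : 'I_n) : lsubmx (ev (lshift n i) : 'rV[R]_(n + n)) = ev i.
Proof. by apply/rowP => j; rewrite !mxE (inj_eq (@lshift_inj _ _)). Qed.
Lemma rsub_evl (i : 'I_n) : rsubmx (ev (lshift n i) : 'rV[R]_(n + n)) = 0.
Proof. by apply/rowP => j; rewrite !mxE eq_rlshift andbF. Qed.
Lemma lsub_evr (i : 'I_n) : lsubmx (ev (rshift n i) : 'rV[R]_(n + n)) = 0.
Proof. by apply/rowP => j; rewrite !mxE eq_lrshift andbF. Qed.
Lemma rsub_evr (i : 'I_n) : rsubmx (ev (rshift n i) : 'rV[R]_(n + n)) = ev i.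
Proof. by apply/rowP => j; rewrite !mxE (inj_eq (@rshift_inj _ _)). Qed.

Lemma jac_mulmap (z : 'rV[R]_(n + n)) :
  jac (mulmap mul) z = row_mx (Rmx (rsubmx z))^T (Lmx (lsubmx z))^T.
Proof.
apply/matrixP => k i; rewrite mxE pd_mulmap.
case: (split_ordP i) => i' ->.
  by rewrite row_mxEl lsub_evl rsub_evl am0r add0r !mxE.
by rewrite row_mxEr lsub_evr rsub_evr am0l addr0 !mxE.
Qed.
End Alg.

Lemma trD {R : realType} {n} (A B : 'M[R]_n) : (A + B)^T = A^T + B^T. Proof. exact: linearD. Qed.
Lemma trZ {R : realType} {n} (a : R) (A : 'M[R]_n) : (a *: A)^T = a *: A^T. Proof. exact: linearZ. Qed.
Lemma trN {R : realType} {n} (A : 'M[R]_n) : (- A)^T = - A^T. Proof. exact: linearN. Qed.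
Lemma gD {R : realType} {p q} (A B : 'M[R]_(p, q)) i j : (A + B) i j = A i j + B i j. Proof. by rewrite mxE. Qed.
Lemma gZ {R : realType} {p q} (a : R) (A : 'M[R]_(p, q)) i j : (a *: A) i j = a * A i j. Proof. by rewrite mxE. Qed.
Lemma sRE {R : realType} (a b : R) : a *: b = a * b. Proof. by []. Qed.

Lemma lin0 {R : realType} {n : nat} (f : 'rV[R]_n -> 'rV[R]_n) :
  (forall a x y, f (a *: x + y) = a *: f x + f y) -> (forall p, f (ev p) = 0) -> forall x, f x = 0.
Proof.
move=> hf h0 x.
have f0 : f 0 = 0.
  have := hf 1 0 0; rewrite !scale1r addr0 => E; apply/esym/(addrI (f 0)); rewrite addr0; exact: E.
rewrite (row_sum_delta x); elim/big_rec: _ => [|i y _ IH]; first exact: f0.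
by rewrite hf IH addr0 -/(ev i) h0 scaler0.
Qed.

Section Poi.
Context {R : realType} {n : nat} (mul : 'rV[R]_n -> 'rV[R]_n -> 'rV[R]_n)
  (u : 'rV[R]_n) (hA : assoc_unital_algebra mul u) (delta : {linear 'M[R]_n -> 'M[R]_n}).

Definition Bm (x y : 'rV[R]_n) := delta (tens x y).
Definition Pm (x : 'rV[R]_n) := delta (tens x x).

Lemma tensDl x y z : tens (x + y) z = tens x z + tens y z :> 'M[R]_n.
Proof. by rewrite /tens linearD mulmxDl. Qed.
Lemma tensZl (a : R) x z : tens (a *: x) z = a *: tens x z :> 'M[R]_n.
Proof. by rewrite /tens linearZ scalemxAl. Qed.
Lemma tensDr x y z : tens z (x + y) = tens z x + tens z y :> 'M[R]_n.
Proof. by rewrite /tens mulmxDr. Qed.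
Lemma tensZr (a : R) x z : tens z (a *: x) = a *: tens z x :> 'M[R]_n.
Proof. by rewrite /tens scalemxAr. Qed.
Lemma BmDl x y z : Bm (x + y) z = Bm x z + Bm y z.
Proof. by rewrite /Bm tensDl linearD. Qed.
Lemma BmZl a x z : Bm (a *: x) z = a *: Bm x z.
Proof. by rewrite /Bm tensZl linearZ. Qed.
Lemma BmDr x y z : Bm z (x + y) = Bm z x + Bm z y.
Proof. by rewrite /Bm tensDr linearD. Qed.
Lemma BmZr a x z : Bm z (a *: x) = a *: Bm z x.
Proof. by rewrite /Bm tensZr linearZ. Qed.
Lemma BmNl x z : Bm (- x) z = - Bm x z.
Proof. by rewrite -scaleN1r BmZl scaleN1r. Qed.
Lemma BmNr x z : Bm z (- x) = - Bm z x.
Proof. by rewrite -scaleN1r BmZr scaleN1r. Qed.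
Lemma Bm0l z : Bm 0 z = 0.
Proof. by rewrite -(scale0r 0) BmZl scale0r. Qed.
Lemma Bm0r z : Bm z 0 = 0.
Proof. by rewrite -(scale0r 0) BmZr scale0r. Qed.

Lemma Mult_id :
  poisson_map setT (prod_P (fun x => delta (tens x x))) setT
              (fun x => delta (tens x x)) (mulmap mul) ->
  forall x y, Pm (mul x y) = (Rmx mul y)^T *m Pm x *m Rmx mul y + (Lmx mul x)^T *m Pm y *m Lmx mul x.
Proof.
move=> [_ hM] x y; have [_ E] := hM (row_mx x y) I.
move: E; rewrite (jac_mulmap _ _ hA) /prod_P /mulmap !row_mxKl !row_mxKr.
rewrite mul_row_block !mulmx0 addr0 add0r tr_row_mx mul_row_col !trmxK /Pm => <-.
by [].
Qed.

Hypothesis hM : poisson_map setT (prod_P (fun x => delta (tens x x))) setT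
              (fun x => delta (tens x x)) (mulmap mul).

Lemma Pu0 : Bm u u = 0.
Proof.
have := Mult_id hM u u; rewrite (am1l _ _ hA) (Rmx1 _ _ hA) (Lmx1 _ _ hA) trmx1 mul1mx mulmx1 /Pm -/(Bm u u).
move=> E; apply/esym/(addrI (Bm u u)); rewrite addr0; exact: E.
Qed.

Lemma P_expand h v x i j : (Bm (h *: v + x) (h *: v + x)) i j
  = (Bm x x) i j + h * (Bm x v + Bm v x) i j + (h * h) * (Bm v v) i j.
Proof. rewrite !(BmDl, BmDr, BmZl, BmZr) !mxE; ring. Qed.

Lemma pdP x j k l : pd (fun y => delta (tens y y) j k) l x = (Bm x (ev l) + Bm (ev l) x) j k.
Proof.
rewrite /pd; apply: (@dquad _ _ _ _ _ _ _ ((Bm (ev l) (ev l)) j k)) => h.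
exact: P_expand.
Qed.

Lemma linE x : linearization (fun y => delta (tens y y)) u x = Bm x u + Bm u x.
Proof.
apply/matrixP => i j; rewrite mxE.
apply: (@dquad _ _ _ _ _ _ _ ((Bm x x) i j)) => h.
move: (P_expand h x u i j); rewrite /Bm !mxE => ->; rewrite !sRE; ring.
Qed.

Definition Dm v := Bm v u + Bm u v.

Lemma coef_expand s t a b i j :
  (Bm u (mul a b) + Bm (mul a b) u) i j * (s * t) + (Bm a b + Bm b a) i j * (s * t)
  + ((Bm a a) i j * (s * s) + (Bm b b) i j * (t * t) + (Bm u a + Bm a u) i j * s + (Bm u b + Bm b u) i j * t
  + (Bm a (mul a b) + Bm (mul a b) a) i j * (s * s * t) + (Bm b (mul a b) + Bm (mul a b) b) i j * (s * t * t)
  + (Bm (mul a b) (mul a b)) i j * (s * s * t * t))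
  = ((Rmx mul (t *: b + u))^T *m Pm (s *: a + u) *m Rmx mul (t *: b + u)) i j
   + ((Lmx mul (s *: a + u))^T *m Pm (t *: b + u) *m Lmx mul (s *: a + u)) i j.
Proof.
rewrite -eD -Mult_id // (amDl _ _ hA) !(amDr _ _ hA) !(amZl _ _ hA) !(amZr _ _ hA) !(am1l _ _ hA) ?(am1r _ _ hA).
rewrite /Pm -!/(Bm _ _) !(BmDl, BmDr, BmZl, BmZr) Pu0 !mxE ?sRE; ring.
Qed.

Ltac mexp := (rewrite ?(RmxD _ _ hA) ?(RmxZ _ _ hA) ?(LmxD _ _ hA) ?(LmxZ _ _ hA) ?(Rmx1 _ _ hA) ?(Lmx1 _ _ hA));
  (rewrite /Pm -?/(Bm _ _)); (rewrite ?(BmDl, BmDr, BmZl, BmZr) ?Pu0 ?trD ?trZ ?trmx1);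
  (do 3 rewrite ?(mulmxDl, mulmxDr) -?scalemxAl -?scalemxAr ?(mul1mx, mulmx1, mulmx0, mul0mx, scaler0, addr0, add0r));
  (rewrite ?(eD, eZ, eN)).

Lemma coef_st s t a b i j :
  (Bm u (mul a b) + Bm (mul a b) u) i j * (s * t) + (Bm a b + Bm b a) i j * (s * t)
  + ((Bm a a) i j * (s * s) + (Bm b b) i j * (t * t) + (Bm u a + Bm a u) i j * s + (Bm u b + Bm b u) i j * t
  + (Bm a (mul a b) + Bm (mul a b) a) i j * (s * s * t) + (Bm b (mul a b) + Bm (mul a b) b) i j * (s * t * t)
  + (Bm (mul a b) (mul a b)) i j * (s * s * t * t))
  = s * (Bm a u i j + Bm u a i j) + s * s * Bm a a i j
    + t * s * (((Rmx mul b)^T *m Bm a u) i j + ((Rmx mul b)^T *m Bm u a) i j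
               + (Bm a u *m Rmx mul b) i j + (Bm u a *m Rmx mul b) i j)
    + t * s * s * (((Rmx mul b)^T *m Bm a a) i j + (Bm a a *m Rmx mul b) i j)
    + t * t * s * (((Rmx mul b)^T *m Bm a u *m Rmx mul b) i j + ((Rmx mul b)^T *m Bm u a *m Rmx mul b) i j)
    + t * t * s * s * ((Rmx mul b)^T *m Bm a a *m Rmx mul b) i j
    + t * (Bm b u i j + Bm u b i j) + t * t * Bm b b i j
    + s * t * (((Lmx mul a)^T *m Bm b u) i j + ((Lmx mul a)^T *m Bm u b) i j
               + (Bm b u *m Lmx mul a) i j + (Bm u b *m Lmx mul a) i j)
    + s * t * t * (((Lmx mul a)^T *m Bm b b) i j + (Bm b b *m Lmx mul a) i j)
    + s * s * t * (((Lmx mul a)^T *m Bm b u *m Lmx mul a) i j + ((Lmx mul a)^T *m Bm u b *m Lmx mul a) i j)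
    + s * s * t * t * ((Lmx mul a)^T *m Bm b b *m Lmx mul a) i j.
Proof.
rewrite coef_expand; mexp; ring.
Qed.

Lemma coef a b : Dm (mul a b) + Bm a b + Bm b a = (Rmx mul b)^T *m Dm a + Dm a *m Rmx mul b
  + (Lmx mul a)^T *m Dm b + Dm b *m Lmx mul a.
Proof.
apply/matrixP => i j.
have E s t := coef_st s t a b i j.
move: (E 1 1) (E 1 (-1)) (E (-1) 1) (E (-1) (-1)); clear E.
rewrite /Dm; rewrite ?(mulmxDl, mulmxDr) ?(eD, eZ, eN) => E1 E2 E3 E4.
lra.
Qed.

Definition Km x := Lmx mul x - Rmx mul x.

Lemma brE x v : commutator mul x v = v *m Km x.
Proof. by rewrite /commutator /Km mulmxBr (LmxE _ _ hA) (RmxE _ _ hA). Qed.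

Lemma tens_ev (i j : 'I_n) : tens (ev i) (ev j) = delta_mx i j :> 'M[R]_n.
Proof. by rewrite /tens /ev trmx_delta mul_delta_mx. Qed.

Lemma ad_tensE x T : ad_tens (commutator mul) x T = (Km x)^T *m T + T *m Km x.
Proof.
rewrite [in RHS](matrix_sum_delta T) /ad_tens mulmx_sumr mulmx_suml -big_split; apply: eq_bigr => i _.
rewrite mulmx_sumr mulmx_suml -big_split; apply: eq_bigr => j _.
rewrite !brE /tens trmx_mul -!mulmxA -/(tens (ev i) (ev j)) mulmxA -/(tens (ev i) (ev j)) tens_ev.
by rewrite scalerDr -scalemxAr -scalemxAl.
Qed.

Lemma cocycle x y : Dm (commutator mul x y)
  = ad_tens (commutator mul) x (Dm y) - ad_tens (commutator mul) y (Dm x).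
Proof.
rewrite !ad_tensE; apply/matrixP => i j.
have E1 := congr1 (fun M : 'M[R]_n => M i j) (coef x y).
have E2 := congr1 (fun M : 'M[R]_n => M i j) (coef y x).
move: E1 E2; rewrite /= /commutator /Km /Dm !(BmDl, BmDr, BmNl, BmNr) !trD !trN.
rewrite ?(mulmxDl, mulmxDr, mulmxBl, mulmxBr, mulNmx, mulmxN) ?(eD, eZ, eN) => E1 E2.
lra.
Qed.

Hypothesis hP : poisson_structure setT (fun x => delta (tens x x)).

Lemma c1 w p q r : \sum_(l < n) ((Dm w) p l * (Dm (ev l)) q r + (Dm w) q l * (Dm (ev l)) r p
   + (Dm w) r l * (Dm (ev l)) p q) = 0.
Proof.
have [_ _ _ hJ] := hP.
pose C l := Bm w (ev l) + Bm (ev l) w.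
set SA := \sum_(l < n) _.
pose SB := \sum_(l < n) ((Dm w) p l * C l q r + Bm w w p l * Dm (ev l) q r
   + ((Dm w) q l * C l r p + Bm w w q l * Dm (ev l) r p)
   + ((Dm w) r l * C l p q + Bm w w r l * Dm (ev l) p q)).
pose SC := \sum_(l < n) (Bm w w p l * C l q r + Bm w w q l * C l r p + Bm w w r l * C l p q).
have J t : t * SA + t * t * SB + t * t * t * SC = 0.
  rewrite -(hJ (t *: w + u) I p q r) /SA /SB /SC !mulr_sumr -!big_split; apply: eq_bigr => l _ /=.
  rewrite !pdP -!/(Bm _ _) !P_expand /C /Dm Pu0 !(BmDl, BmDr, BmZl, BmZr) !mxE; ring.
have := J 1; have := J (-1); have := J 2; lra.
Qed.

Lemma cobrE (D : 'rV[R]_n -> 'M[R]_n) x y k : cobr D x y 0 k = (x *m D (ev k) *m y^T) 0 0.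
Proof. by rewrite mxE. Qed.

Lemma cobrDl (D : 'rV[R]_n -> 'M[R]_n) a x y z :
  cobr D (a *: x + y) z = a *: cobr D x z + cobr D y z.
Proof.
apply/rowP => k; rewrite reD reZ !cobrE !mulmxDl -!scalemxAl.
by rewrite gD gZ.
Qed.

Lemma cobrDr (D : 'rV[R]_n -> 'M[R]_n) a x y z :
  cobr D z (a *: x + y) = a *: cobr D z x + cobr D z y.
Proof.
apply/rowP => k; rewrite reD reZ !cobrE linearD linearZ /= mulmxDr -scalemxAr.
by rewrite gD gZ.
Qed.

Lemma evMev (M : 'M[R]_n) (p q : 'I_n) : (ev p *m M *m (ev q)^T) 0 0 = M p q.
Proof. by rewrite /ev -(rowE p M) trmx_delta -(colE q (row p M)) !mxE. Qed.

Lemma evMv (M : 'M[R]_n) (p : 'I_n) (v : 'rV[R]_n) : (ev p *m M *m v^T) 0 0 = \sum_b M p b * v 0 b.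
Proof. by rewrite /ev -(rowE p M) mxE; apply: eq_bigr => b _; rewrite !mxE. Qed.

Definition Gj x y z := cobr Dm x (cobr Dm y z) + cobr Dm y (cobr Dm z x) + cobr Dm z (cobr Dm x y).

Lemma Gj1 a x x' y z : Gj (a *: x + x') y z = a *: Gj x y z + Gj x' y z.
Proof. rewrite /Gj !(cobrDl, cobrDr); apply/rowP => k; rewrite !(reD, reZ); ring. Qed.
Lemma Gj2 a x y y' z : Gj x (a *: y + y') z = a *: Gj x y z + Gj x y' z.
Proof. rewrite /Gj !(cobrDl, cobrDr); apply/rowP => k; rewrite !(reD, reZ); ring. Qed.
Lemma Gj3 a x y z z' : Gj x y (a *: z + z') = a *: Gj x y z + Gj x y z'.
Proof. rewrite /Gj !(cobrDl, cobrDr); apply/rowP => k; rewrite !(reD, reZ); ring. Qed.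

Lemma Gj_ev p q r : Gj (ev p) (ev q) (ev r) = 0.
Proof.
apply/rowP => k; rewrite /Gj !reD !cobrE !evMv mxE.
under eq_bigr => b _ do rewrite cobrE evMev.
under [X in _ + X + _]eq_bigr => b _ do rewrite cobrE evMev.
under [X in _ + X]eq_bigr => b _ do rewrite cobrE evMev.
rewrite -!big_split /=; exact: c1.
Qed.

Lemma cojac x y z : Gj x y z = 0.
Proof.
have L3 p q : forall z, Gj (ev p) (ev q) z = 0.
  by apply: lin0 => [a z1 z2|r]; [exact: Gj3|exact: Gj_ev].
have L2 p z' : forall y, Gj (ev p) y z' = 0.
  by apply: lin0 => [a z1 z2|r]; [exact: Gj2|exact: L3].
by apply: (@lin0 _ _ (fun x => Gj x y z)) => [a z1 z2|r]; [exact: Gj1|exact: L2].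
Qed.

Lemma z0 (i j : 'I_n) : (0 : 'M[R]_n) i j = 0. Proof. by rewrite mxE. Qed.

Lemma pd_prodP (z : 'rV[R]_(n + n)) j k l :
  pd (fun y => prod_P (fun x => delta (tens x x)) y j k) l z =
  (block_mx (Bm (lsubmx z) (lsubmx (ev l)) + Bm (lsubmx (ev l)) (lsubmx z)) 0 0
            (Bm (rsubmx z) (rsubmx (ev l)) + Bm (rsubmx (ev l)) (rsubmx z))) j k.
Proof.
rewrite /pd; apply: (@dquad _ _ _ _ _ _ _
  ((block_mx (Bm (lsubmx (ev l)) (lsubmx (ev l))) 0 0 (Bm (rsubmx (ev l)) (rsubmx (ev l)))) j k)) => h.
rewrite /prod_P !linearD !linearZ /=.
case: (split_ordP j) => j' ->; case: (split_ordP k) => k' ->;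
  rewrite ?(block_mxEul, block_mxEur, block_mxEdl, block_mxEdr) ?z0 -?/(Bm _ _) ?P_expand ?sRE; ring.
Qed.

Lemma JL x (i j k : 'I_n) : \sum_(l < n) (delta (tens x x) i l * (Bm x (ev l) + Bm (ev l) x) j k
   + delta (tens x x) j l * (Bm x (ev l) + Bm (ev l) x) k i
   + delta (tens x x) k l * (Bm x (ev l) + Bm (ev l) x) i j) = 0.
Proof.
have [_ _ _ hJ] := hP; rewrite -[RHS](hJ x I i j k); apply: eq_bigr => l _; by rewrite !pdP.
Qed.

Lemma jac_prod (z : 'rV[R]_(n + n)) (i j k : 'I_(n + n)) :
  \sum_(l < n + n) (prod_P (fun x => delta (tens x x)) z i l * pd (fun y => prod_P (fun x => delta (tens x x)) y j k) l z
     + prod_P (fun x => delta (tens x x)) z j l * pd (fun y => prod_P (fun x => delta (tens x x)) y k i) l z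
     + prod_P (fun x => delta (tens x x)) z k l * pd (fun y => prod_P (fun x => delta (tens x x)) y i j) l z) = 0.
Proof.
under eq_bigr => l _ do rewrite !pd_prodP.
rewrite big_split_ord /= /prod_P.
case: (split_ordP i) => i' ->; case: (split_ordP j) => j' ->; case: (split_ordP k) => k' ->.
all: under eq_bigr => l _ do rewrite ?(block_mxEul, block_mxEur, block_mxEdl, block_mxEdr)
   ?(lsub_evl, rsub_evl, lsub_evr, rsub_evr) ?(Bm0l, Bm0r) ?addr0 ?z0 ?(mul0r, mulr0) ?(addr0, add0r).
all: under [X in _ + X]eq_bigr => l _ do rewrite ?(block_mxEul, block_mxEur, block_mxEdl, block_mxEdr)
   ?(lsub_evl, rsub_evl, lsub_evr, rsub_evr) ?(Bm0l, Bm0r) ?addr0 ?z0 ?(mul0r, mulr0) ?(addr0, add0r).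
all: rewrite ?big1_eq ?addr0 ?add0r //; try (by apply: big1 => l _; ring). exact: (JL (lsubmx z) i' j' k'). exact: (JL (rsubmx z) i' j' k').
Qed.

Lemma DmP a x y : Dm (a *: x + y) = a *: Dm x + Dm y.
Proof. rewrite /Dm !(BmDl, BmDr, BmZl, BmZr); apply/matrixP => i j; rewrite !(eD, eZ); ring. Qed.

Lemma Dm_skew (hd : forall S : 'M[R]_n, is_symm_mx S -> is_skew_mx (delta S)) x : is_skew_mx (Dm x).
Proof.
rewrite /Dm /Bm -linearD; apply: hd.
by rewrite /is_symm_mx trD /tens !trmx_mul !trmxK addrC.
Qed.

Lemma lie_comm :
  [/\ (forall (a : R) x y z, commutator mul (a *: x + y) z = a *: commutator mul x z + commutator mul y z),
      (forall x y, commutator mul x y = - commutator mul y x) &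
      (forall x y z, commutator mul x (commutator mul y z) + commutator mul y (commutator mul z x)
         + commutator mul z (commutator mul x y) = 0)].
Proof.
split.
- move=> a x y z; rewrite /commutator (amDl _ _ hA) (amDr _ _ hA) (amZl _ _ hA) (amZr _ _ hA).
  apply/rowP => k; rewrite !(reD, reZ, mxE); ring.
- by move=> x y; rewrite /commutator opprB.
- move=> x y z; rewrite /commutator !(amBl _ _ hA) !(amBr _ _ hA) !(amA _ _ hA).
  apply/rowP => k; rewrite !(reD, reZ, mxE); ring.
Qed.
End Poi.

Lemma diff_sum {R : realType} {V W : normedModType R} (I : Type) (r : seq I) (P : pred I)
  (G : I -> V -> W) x : (forall i, differentiable (G i) x) ->
  differentiable (fun z => \sum_(i <- r | P i) G i z) x.
Proof.
move=> h; rewrite -fct_sumE; elim/big_rec: _ => [|i F _ IH].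
  exact: differentiable_cst.
exact: differentiableD.
Qed.

Lemma diff_prod {R : realType} {V : normedModType R} (I : Type) (r : seq I)
  (G : I -> V -> R) x : (forall i, differentiable (G i) x) ->
  differentiable (fun z => \prod_(i <- r) G i z) x.
Proof.
move=> h; elim: r => [|a r IH].
  have -> : (fun z => \prod_(i <- [::]) G i z) = cst 1 by apply/funext => z; rewrite big_nil.
  exact: differentiable_cst.
have -> : (fun z => \prod_(i <- a :: r) G i z) = (G a * (fun z => \prod_(i <- r) G i z))
  by apply/funext => z; rewrite big_cons.
exact: differentiableM.
Qed.

Section An.
Context {R : realType} {n : nat} (mul : 'rV[R]_n -> 'rV[R]_n -> 'rV[R]_n)
  (u : 'rV[R]_n) (hA : assoc_unital_algebra mul u).

Lemma diff_Lmx_entry i j (x : 'rV[R]_n) : differentiable (fun z => Lmx mul z i j) x.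
Proof.
have -> : (fun z => Lmx mul z i j) = (fun z => \sum_k z 0 k * (mul (ev k) (ev i)) 0 j).
  apply/funext => z; rewrite mxE {1}(rowdec z) (am_suml _ _ hA) summxE.
  by apply: eq_bigr => k _; rewrite (amZl _ _ hA) mxE.
apply: diff_sum => k; apply: differentiableM; first exact: differentiable_coord.
exact: differentiable_cst.
Qed.

Lemma diff_det (x : 'rV[R]_n) : differentiable (fun z => \det (Lmx mul z)) x.
Proof.
rewrite /determinant; apply: diff_sum => s; apply: differentiableM.
  exact: differentiable_cst.
apply: diff_prod => i; exact: diff_Lmx_entry.
Qed.

Lemma LmxM x y : Lmx mul (mul x y) = Lmx mul y *m Lmx mul x.
Proof.
apply/row_matrixP => i; rewrite !rowE mulmxA !(LmxE _ _ hA); by rewrite (amA _ _ hA).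
Qed.

Lemma unitsE : units mul u = (fun z => \det (Lmx mul z)) @^-1` [set r | r != 0].
Proof.
apply/seteqP; split => x /=.
  case=> y [xy yx]; have := congr1 (fun M => \det M) (LmxM x y).
  rewrite xy (Lmx1 _ _ hA) det1 det_mulmx => /esym E; apply/eqP => h.
  by move: E; rewrite h mulr0 => /esym/eqP; rewrite oner_eq0.
move=> hx; have xU : Lmx mul x \in unitmx by rewrite unitmxE unitfE.
exists (u *m invmx (Lmx mul x)); split.
  by rewrite -(LmxE _ _ hA) mulmxKV.
apply: (can_inj (mulmxK xU)).
by rewrite !(LmxE _ _ hA) (amA _ _ hA) -(LmxE _ _ hA (u *m invmx _) x) mulmxKV // (am1l _ _ hA) (am1r _ _ hA).
Qed.

Lemma open_units : open (units mul u).
Proof.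
rewrite unitsE; apply: open_comp; last exact: open_neq.
move=> z _; apply: differentiable_continuous; exact: diff_det.
Qed.

Lemma open_prod_units : open (prod_set (units mul u)).
Proof.
have -> : prod_set (units mul u) = (lsubmx @^-1` units mul u) `&` (rsubmx @^-1` units mul u) by [].
apply: openI; apply: open_comp; (try exact: open_units) => z _.
  exact: continuous_lsubmx.
exact: continuous_rsubmx.
Qed.
End An.

Lemma diff_prodP {R : realType} {n : nat} (P : 'rV[R]_n -> 'M[R]_n)
  (hd : forall x, differentiable P x) z : differentiable (prod_P P) z.
Proof.
have -> : prod_P P = fun z => \sum_i \sum_j (prod_P P z i j) *: delta_mx i j.
  by apply/funext => y; rewrite -matrix_sum_delta.
apply: diff_sum => i; apply: diff_sum => j; apply: differentiableZl.
rewrite /prod_P.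
have dc : forall (f : 'rV[R]_(n + n) -> 'rV[R]_n) (i j : 'I_n), (forall y, differentiable f y) ->
    differentiable (fun y => P (f y) i j) z.
  move=> f i' j' df; apply: (@differentiable_comp _ _ _ _ (P \o f) (fun M : 'M[R]_n => M i' j')).
    by apply: differentiable_comp; [exact: df|exact: hd].
  exact: differentiable_coord.
case: (split_ordP i) => i' ->; case: (split_ordP j) => j' ->.
- under eq_fun do rewrite block_mxEul. apply: (dc lsubmx) => y; exact: differentiable_lsubmx.
- under eq_fun do rewrite block_mxEur mxE. exact: differentiable_cst.
- under eq_fun do rewrite block_mxEdl mxE. exact: differentiable_cst.
- under eq_fun do rewrite block_mxEdr. apply: (dc rsubmx) => y; exact: differentiable_rsubmx.
Qed.

Theorem theorem5 (R : realType) (n : nat)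
  (mul : 'rV[R]_n -> 'rV[R]_n -> 'rV[R]_n) (u : 'rV[R]_n)
  (delta : {linear 'M[R]_n -> 'M[R]_n}) :
  assoc_unital_algebra mul u ->
  (* delta : Symm(A (x) A) -> A /\ A *)
  (forall S : 'M[R]_n, is_symm_mx S -> is_skew_mx (delta S)) ->
  (* the quadratic bracket {xi, eta} = delta^*(xi /\ eta) is Poisson on A *)
  poisson_structure setT (fun x => delta (tens x x)) ->
  (* and compatible with the multiplication *)
  poisson_map setT (prod_P (fun x => delta (tens x x))) setT
              (fun x => delta (tens x x)) (mulmap mul) ->
  poisson_lie_group mul u (units mul u) (fun x => delta (tens x x)) /\
  (forall x, linearization (fun y => delta (tens y y)) u x
             = delta (tens x u + tens u x)) /\
  lie_bialgebra (commutator mul) (linearization (fun y => delta (tens y y)) u).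
Proof.
move=> hA hd hP hM.
have LE : linearization (fun y => delta (tens y y)) u = Dm u delta.
  by apply/funext => x; rewrite linE.
have [hPo hPd hPs hPj] := hP.
split; [|split].
- split.
  + by exists u; rewrite (am1l _ _ hA).
  + by move=> x [y [h1 h2]]; exists y; split => //; exists x.
  + split.
    * exact: (open_units _ _ hA).
    * by move=> x _; apply: hPd.
    * by move=> x _; apply: hPs.
    * by move=> x _; apply: hPj.
  + split.
    * exact: (open_prod_units _ _ hA).
    * by move=> z _; apply: diff_prodP => x; apply: hPd.
    * move=> z _; rewrite /is_skew_mx /prod_P tr_block_mx !trmx0 (hPs _ I) (hPs _ I).
      by rewrite opp_block_mx !oppr0.
    * by move=> z _ i j k; apply: (jac_prod _ hP).
  + split.
    * move=> z [[a [h1 h2]] [b [h3 h4]]]; exists (mul b a); rewrite /mulmap.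
      split.
        by rewrite -(amA _ _ hA) [mul _ (mul b a)](amA _ _ hA) h3 (am1l _ _ hA).
      by rewrite -(amA _ _ hA) [mul _ (mul _ (rsubmx z))](amA _ _ hA) h2 (am1l _ _ hA).
    * by move=> z _; apply: (proj2 hM).
- by move=> x; rewrite linE /Bm linearD.
- rewrite LE; split; first exact: (lie_comm _ _ hA).
  split.
  + exact: DmP.
  + exact: Dm_skew.
  + by move=> xi eta zeta; apply: (cojac _ _ hA delta hM hP).
  + by move=> x y; apply: (cocycle _ _ hA delta hM).
Qed.
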